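(* Let $(G,c)$ and $(H,c')$ be BPEC-DAGs on the same vertex set $V$. If $\mathcal M(G,c)=\mathcal M(H,c')$, then $G=H$ and $c$ and $c'$ induce the same partition of the edge set into color classes; i.e., each BPEC-DAG is the unique BPEC-DAG in its model equivalence class.
   Context: An edge-colored DAG $(G,c)$, $G=(V,E)$, has a coloring of $V\sqcup E$ (vertex and edge colors disjoint) in which every vertex forms its own color class. It is properly edge-colored if every edge color class contains at least two edges, and blocked if any two edges $ij,kl$ of the same color satisfy $j=l$. A BPEC-DAG is a blocked, properly edge-colored DAG. $\mathcal M(G,c)$ is the set of $(I-\Lambda)^{-T}\Omega(I-\Lambda)^{-1}$ with $\Omega=\mathrm{diag}(\omega_i)$, $\omega_i>0$, $\lambda_{ij}=0$ for $ij\notin E$, and $\lambda_{ij}=\lambda_{kl}$ whenever $c(ij)=c(kl)$. *)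

(* Defs.v *)
From mathcomp Require Import all_boot all_order all_algebra.
From mathcomp Require Import reals.
Set Implicit Arguments. Unset Strict Implicit. Unset Printing Implicit Defensive.
Import Order.TTheory GRing.Theory Num.Theory.
Local Open Scope ring_scope.

(* A directed graph on vertex set 'I_n is given by its edge relation E:
   E i j means the edge i -> j is present. *)

(* No directed cycle: no nonempty E-path from a vertex back to itself
   (this also excludes self-loops). *)
Definition is_dag (n : nat) (E : rel 'I_n) : Prop :=
  forall (i : 'I_n) (p : seq 'I_n),
    p != [::] -> path E i p -> last i p != i.

(* Edge colouring: c i j is the colour of the edge i -> j (only meaningful
   when E i j).  Vertex colours are all singleton classes, so they impose
   no constraint and are not represented. *)

Definition properly_edge_colored (n : nat) (E : rel 'I_n)
  (c : 'I_n -> 'I_n -> nat) : Prop :=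
  forall i j : 'I_n, E i j ->
    exists k l : 'I_n, [/\ E k l, (k, l) != (i, j) & c k l = c i j].

Definition blocked (n : nat) (E : rel 'I_n) (c : 'I_n -> 'I_n -> nat) : Prop :=
  forall i j k l : 'I_n, E i j -> E k l -> c i j = c k l -> j = l.

Definition BPEC_DAG (n : nat) (E : rel 'I_n) (c : 'I_n -> 'I_n -> nat) : Prop :=
  [/\ is_dag E, properly_edge_colored E c & blocked E c].

Definition in_model (R : realType) (n : nat) (E : rel 'I_n)
  (c : 'I_n -> 'I_n -> nat) (S : 'M[R]_n) : Prop :=
  exists (L : 'M[R]_n) (w : 'rV[R]_n),
    [/\ (forall i, 0 < w 0 i),
        (forall i j, ~~ E i j -> L i j = 0),
        (forall i j k l, E i j -> E k l -> c i j = c k l -> L i j = L k l) &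
        S = (invmx (1%:M - L))^T *m diag_mx w *m invmx (1%:M - L)].

(* Main.v *)
Require Import Defs.
From mathcomp Require Import all_boot all_order all_algebra.
From mathcomp Require Import reals.
From Stdlib Require Import Classical.
Set Implicit Arguments. Unset Strict Implicit. Unset Printing Implicit Defensive.
Import Order.TTheory GRing.Theory Num.Theory.
Local Open Scope ring_scope.

Section Graph.
Variable n : nat.

Lemma dag_noloop (E : rel 'I_n) r : is_dag E -> ~~ E r r.
Proof.
move=> hd; apply/negP => h.
by have := hd r [:: r] isT; rewrite /= h eqxx; move/(_ isT).
Qed.

Lemma dag_uniq (E : rel 'I_n) : is_dag E -> forall p r, path E r p -> uniq (r :: p).
Proof.
move=> hd; elim=> [|x p IH] r // hp0.
have /andP[Erx hp] := hp0.
rewrite cons_uniq (IH x hp) andbT; apply/negP => rin.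
have hp' : path E r (x :: p) by rewrite /= Erx.
move: hp'; case/splitPr: rin => p1 p2.
rewrite cat_path => /andP[h1 /= /andP[h2 _]].
have := hd r (rcons p1 r); rewrite rcons_path h1 h2 last_rcons eqxx.
by case: p1 {h1 h2} => [|? ?] /(_ isT isT).
Qed.

Lemma dag_ind (E : rel 'I_n) (Q : 'I_n -> Prop) : is_dag E ->
  (forall r, (forall c, E r c -> Q c) -> Q r) -> forall r, Q r.
Proof.
move=> hd hQ.
suff H : forall m r, (forall p, path E r p -> size p < m)%N -> Q r.
  move=> r; apply: (H n) => p hp.
  have := dag_uniq hd hp; move/card_uniqP => h.
  by have := max_card (mem (r :: p)); rewrite card_ord h.
elim=> [|m IH] r hm; first by have := hm [::] isT.
apply: hQ => c Erc; apply: IH => p hp.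
by have := hm (c :: p); rewrite /= Erc hp /=; apply.
Qed.
End Graph.

Section Mat.
Variable R : realType.
Variable n : nat.
Local Notation ev r := (delta_mx r (0 : 'I_1) : 'cV[R]_n).
Implicit Types (E F : rel 'I_n) (c : 'I_n -> 'I_n -> nat) (S L M : 'M[R]_n).

Definition rep E c S L (w : 'rV[R]_n) :=
  [/\ (forall i, 0 < w 0 i),
      (forall i j, ~~ E i j -> L i j = 0),
      (forall i j k l, E i j -> E k l -> c i j = c k l -> L i j = L k l) &
      S = (invmx (1%:M - L))^T *m diag_mx w *m invmx (1%:M - L)].

Lemma sum_delta (F0 : 'I_n -> R) r : \sum_j F0 j * (1 *+ (r == j)) = F0 r.
Proof.
rewrite (bigD1 r) //= eqxx mulr1n mulr1 big1 ?addr0 // => j.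
by rewrite eq_sym => /negbTE ->; rewrite mulr0n mulr0.
Qed.

Lemma unit_dag E L : is_dag E -> (forall i j, ~~ E i j -> L i j = 0) ->
  (1%:M - L) \in unitmx.
Proof.
move=> hd hL; rewrite -unitmx_tr -row_free_unit; apply/inj_row_free => v hv.
have key : forall r, v 0 r = 0.
  apply: (dag_ind hd) => r IH.
  have := congr1 (fun m : 'rV[R]_n => m 0 r) hv; rewrite !mxE.
  under eq_bigr do rewrite !mxE mulrBr.
  rewrite sumrB sum_delta.
  have -> : \sum_i v 0 i * L r i = 0.
    apply: big1 => j _; case: (boolP (E r j)) => h.
      by rewrite IH // mul0r.
    by rewrite hL // mulr0.
  by rewrite subr0.
by apply/rowP => j; rewrite key mxE.
Qed.

Lemma rep_unit E c S L w : is_dag E -> rep E c S L w -> S \in unitmx.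
Proof.
move=> hd [hw hL _ ->]; have hu := unit_dag hd hL.
rewrite !unitmx_mul unitmx_tr !unitmx_inv hu andbT /=.
rewrite unitmxE det_diag unitfE; apply/prodf_neq0 => i _.
by rewrite gt_eqF.
Qed.

Lemma sink_col E c S L w r : is_dag E -> rep E c S L w ->
  (forall b, L r b = 0) ->
  S *m ((1%:M - L) *m ev r) = w 0 r *: ev r.
Proof.
move=> hd hr hrow; have hu := unit_dag hd (let: And4 _ h _ _ := hr in h).
case: hr => hw hL _ ->.
rewrite -!mulmxA (mulmxA (invmx _)) mulVmx // mul1mx.
have -> : diag_mx w *m ev r = w 0 r *: ev r.
  apply/matrixP => i j; rewrite !mxE (bigD1 r) //= big1 ?addr0.
    rewrite !mxE eqxx /= (ord1 j) eqxx andbT.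
    by case: (eqVneq i r) => [->|_]; rewrite ?mulr1n ?mulr0n ?mulr1 ?mul0r ?mulr0.
  by move=> k /negbTE hk; rewrite !mxE hk andFb mulr0.
rewrite -scalemxAr; congr (_ *: _).
have hA : (1%:M - L)^T *m ev r = ev r.
  apply/matrixP => i j; rewrite !mxE (bigD1 r) //= big1 ?addr0.
    by rewrite !mxE eqxx hrow subr0 /= (ord1 j) eqxx andbT mulr1 eq_sym.
  by move=> k /negbTE hk; rewrite !mxE hk andFb mulr0.
by rewrite -{1}hA mulmxA -trmx_mul mulmxV // trmx1 mul1mx.
Qed.

Lemma uniq_col S (x y : 'cV[R]_n) r a b : S \in unitmx ->
  S *m x = a *: ev r -> S *m y = b *: ev r ->
  x r 0 = 1 -> y r 0 = 1 -> x = y.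
Proof.
move=> hu hx hy x1 y1.
have ex : x = a *: (invmx S *m ev r) by rewrite scalemxAr -hx mulKmx.
have ey : y = b *: (invmx S *m ev r) by rewrite scalemxAr -hy mulKmx.
set z := (invmx S *m ev r) r 0.
have hxz : a * z = 1 by rewrite -x1 ex mxE.
have hyz : b * z = 1 by rewrite -y1 ey mxE.
have zn : z != 0 by apply/eqP => z0; move: hxz; rewrite z0 mulr0 => /eqP; rewrite eq_sym oner_eq0.
have : a = b by apply: (mulIf zn); rewrite hxz hyz.
by move=> eab; rewrite ex ey eab.
Qed.



Lemma col_eq E F c c' S L w M d r : is_dag E -> is_dag F ->
  rep E c S L w -> rep F c' S M d ->
  (forall b, L r b = 0) -> (forall b, M r b = 0) -> forall a, L a r = M a r.
Proof.
move=> hdE hdF hrE hrF rowL rowM a.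
have := uniq_col (rep_unit hdE hrE) (sink_col hdE hrE rowL) (sink_col hdF hrF rowM).
rewrite -!colE !mxE eqxx rowL rowM subr0 => /(_ erefl erefl).
move/colP/(_ a); rewrite !mxE => e.
by move/addrI: e => /oppr_inj.
Qed.

Lemma Zlem E F c c' (P : 'I_n -> Prop) S L w M d : is_dag E -> is_dag F ->
  (forall x y, P x -> E x y -> P y) -> (forall x y, P x -> F x y -> E x y) ->
  rep E c S L w -> rep F c' S M d -> (forall a r, P r -> L a r = 0) ->
  forall a r, P r -> M a r = 0.
Proof.
move=> hdE hdF hP1 hP2 hrE hrF hL0.
suff H : forall r, P r -> forall a, M a r = 0 by move=> a r /H.
apply: (dag_ind hdE) => r IH Pr.
have rowM : forall b, M r b = 0.
  move=> b; case: (boolP (F r b)) => h.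
    have Erb := hP2 _ _ Pr h; exact: IH Erb (hP1 _ _ Pr Erb) r.
  by case: hrF => _ -> // _ _.
have rowL : forall b, L r b = 0.
  move=> b; case: (boolP (E r b)) => h.
    exact: hL0 (hP1 _ _ Pr h).
  by case: hrE => _ -> // _ _.
by move=> a; rewrite -(col_eq hdE hdF hrE hrF rowL rowM) hL0.
Qed.

Definition Lcls F c' s j : 'M[R]_n :=
  \matrix_(a, b) ((F a b && (c' a b == c' s j))%:R).
Definition Lval F c' s : 'M[R]_n :=
  \matrix_(a, b) (if F a b && (b == s) then (c' a b).+1%:R else 0).
Definition Smk L : 'M[R]_n :=
  (invmx (1%:M - L))^T *m diag_mx (const_mx 1) *m invmx (1%:M - L).

Lemma rep_Lcls F c' s j : rep F c' (Smk (Lcls F c' s j)) (Lcls F c' s j) (const_mx 1).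
Proof.
split=> //.
- by move=> i; rewrite mxE ltr01.
- by move=> i k /negbTE h; rewrite mxE h.
- by move=> i k k' l h1 h2 e; rewrite !mxE h1 h2 e.
Qed.

Lemma rep_Lval F c' s : blocked F c' -> rep F c' (Smk (Lval F c' s)) (Lval F c' s) (const_mx 1).
Proof.
move=> hb; split=> //.
- by move=> i; rewrite mxE ltr01.
- by move=> i k /negbTE h; rewrite mxE h.
- move=> i k k' l h1 h2 e; have kl := hb _ _ _ _ h1 h2 e; subst l.
  by rewrite !mxE h1 h2 e.
Qed.



Lemma no_child E F c c' s j L w : BPEC_DAG E c -> BPEC_DAG F c' -> F s j ->
  rep E c (Smk (Lcls F c' s j)) L w -> (forall b, L s b = 0) -> False.
Proof.
move=> [hdE hpE hbE] [hdF hpF hbF] Fsj hr hrow.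
set L' := Lcls F c' s j.
have hsuppL' : forall i k, ~~ F i k -> L' i k = 0 by case: (rep_Lcls F c' s j).
have hu' := unit_dag hdF hsuppL'.
set A' := 1%:M - L'.
set K := A' *m A'^T.
have hK : K *m Smk L' = 1%:M.
  rewrite /Smk diag_const_mx mulmx1 /K -!mulmxA (mulmxA A'^T) -trmx_mul.
  by rewrite mulVmx // trmx1 mul1mx mulmxV.
have hx := sink_col hdE hr hrow.
have ex : (1%:M - L) *m ev s = w 0 s *: (K *m ev s).
  by rewrite scalemxAr -hx -/L' (mulmxA K) hK mul1mx.
have sj : s != j by apply/eqP => e; subst j; move: (dag_noloop s hdF); rewrite Fsj.
have L'sb : forall b, L' s b = 1 *+ (j == b).
  move=> b; rewrite /L' mxE; case: (eqVneq j b) => [<-|jb].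
    by rewrite Fsj eqxx.
  case: (boolP (F s b && (c' s b == c' s j))) => // /andP[Fsb /eqP e].
  by move: jb; rewrite (hbF _ _ _ _ Fsb Fsj e) eqxx.
have L'as : forall a, L' a s = 0.
  move=> a; rewrite /L' mxE; case: (boolP (F a s && (c' a s == c' s j))) => // /andP[Fas /eqP e].
  by move: sj; rewrite (hbF _ _ _ _ Fas Fsj e) eqxx.
have hKs : forall a, K a s = 1 *+ (a == s) - (1 *+ (a == j) - L' a j).
  have hAs : forall b, A' s b = 1 *+ (s == b) - 1 *+ (j == b).
    by move=> b; rewrite -L'sb /A' !mxE.
  move=> a; rewrite /K mxE.
  under eq_bigr => b _ do rewrite [A'^T _ _]mxE hAs mulrBr.
  rewrite sumrB !sum_delta /A' [(_ - L') a s]mxE [(_ - L') a j]mxE [(- L') a s]mxE [(- L') a j]mxE L'as subr0 [1%:M a s]mxE [1%:M a j]mxE.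
  by [].
have ent : forall a, 1 *+ (a == s) - L a s = w 0 s * K a s.
  move=> a; have := congr1 (fun v : 'cV[R]_n => v a 0) ex.
  by rewrite -!colE !mxE.
have wpos : 0 < w 0 s by case: hr => h _ _ _; apply: h.
have Ljs : L j s = w 0 s.
  have js : (j == s) = false by rewrite eq_sym (negbTE sj).
  have := ent j; rewrite hKs eqxx js [L' j j]mxE (negbTE (dag_noloop j hdF)) /=.
  by rewrite !sub0r subr0 mulrN1 => /oppr_inj.
have Ejs : E j s.
  apply/negPn/negP => h; move: wpos; rewrite -Ljs.
  by case: hr => _ -> // _ _; rewrite ltxx.
have [k [l [Ekl neq ekl]]] := hpE _ _ Ejs.
have ls : l = s by apply: (hbE _ _ _ _ Ekl Ejs ekl).
subst l.
have kj : k != j by apply: contra neq => /eqP ->.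
have ks : k != s by apply/eqP => e; subst k; move: (dag_noloop s hdE); rewrite Ekl.
have Lks : L k s = w 0 s.
  by rewrite -Ljs; case: hr => _ _ h _; apply: h.
have := ent k; rewrite hKs (negbTE ks) (negbTE kj) Lks !mulr0n !sub0r opprK.
have : 0 <= L' k j by rewrite mxE ler0n.
move=> h1 h2.
have : 0 <= w 0 s * L' k j by rewrite mulr_ge0 // ltW.
by rewrite -h2 oppr_ge0 leNgt wpos.
Qed.



Lemma half E F c c' s L w : is_dag E -> BPEC_DAG F c' ->
  rep E c (Smk (Lval F c' s)) L w -> (forall b, L s b = 0) ->
  (forall a, F a s -> E a s) /\
  (forall a b, F a s -> F b s -> E a s -> E b s -> c a s = c b s -> c' a s = c' b s).
Proof.
move=> hdE [hdF hpF hbF] hr hrow.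
have hrF := rep_Lval s hbF.
have rowV : forall b, Lval F c' s s b = 0.
  move=> b; rewrite mxE; case: (eqVneq b s) => [->|_]; last by rewrite andbF.
  by rewrite (negbTE (dag_noloop s hdF)).
have ceq := col_eq hdE hdF hr hrF hrow rowV.
split.
  move=> a Fas; apply/negPn/negP => h.
  have : L a s = 0 by case: hr => _ -> // _ _.
  rewrite ceq mxE Fas eqxx /= => /eqP; by rewrite pnatr_eq0.
move=> a b Fas Fbs Eas Ebs e.
have : L a s = L b s by case: hr => _ _ h _; apply: h.
rewrite !ceq !mxE Fas Fbs eqxx /= => /eqP; rewrite eqr_nat eqSS => /eqP //.
Qed.

End Mat.

Definition Qg n (E F : rel 'I_n) (c c' : 'I_n -> 'I_n -> nat) (s : 'I_n) :=
  [/\ (forall a, E a s = F a s),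
      (forall a b, E a s -> E b s -> (c a s = c b s <-> c' a s = c' b s)) &
      (forall d, F s d -> E s d)].

Inductive AG n (E F : rel 'I_n) (c c' : 'I_n -> 'I_n -> nat) : 'I_n -> Prop :=
  AGi r : Qg E F c c' r -> (forall d, E r d -> AG E F c c' d) -> AG E F c c' r.

Lemma allAG (R : realType) n (E F : rel 'I_n) (c c' : 'I_n -> 'I_n -> nat) :
  BPEC_DAG E c -> BPEC_DAG F c' ->
  (forall S : 'M[R]_n, in_model E c S <-> in_model F c' S) ->
  forall r, AG E F c c' r.
Proof.
move=> hG hH hM.
have [hdE hpE hbE] := hG; have [hdF hpF hbF] := hH.
apply: (dag_ind hdE) => r IH.
case: (classic (AG E F c c' r)) => // nr.
set P := AG E F c c'.
have hP1 : forall x y, P x -> E x y -> P y by move=> x y [] ? _ h; apply: h.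
have hP2 : forall x y, P x -> F x y -> E x y by move=> x y [] ? [_ _ h] _; apply: h.
have hP1' : forall x y, P x -> F x y -> P y.
  by move=> x y Px Fxy; apply: hP1 Px (hP2 _ _ Px Fxy).
have hP2' : forall x y, P x -> E x y -> F x y.
  move=> x y Px Exy; have : Qg E F c c' y by case: (hP1 _ _ Px Exy).
  by case=> h _ _; rewrite -h.
have rowE : forall (L : 'M[R]_n) w S, rep E c S L w -> (forall a q, P q -> L a q = 0) ->
    forall b, L r b = 0.
  move=> L w S hr Lz b; case: (boolP (E r b)) => h; first exact: Lz (IH _ h).
  by case: hr => _ -> // _ _.
have claim1 : forall j, F r j -> E r j.
  move=> j Frj; case: (classic (P j)) => Pj.
    have : Qg E F c c' j by case: Pj.
    by case=> h _ _; rewrite h.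
  exfalso.
  have hrF := rep_Lcls R F c' r j.
  have [L [w hr]] : in_model E c (Smk (Lcls R F c' r j)).
    by apply/hM; exists (Lcls R F c' r j), (const_mx 1).
  have zero : forall a q, P q -> Lcls R F c' r j a q = 0 :> R.
    move=> a q Pq; rewrite mxE.
    case: (boolP (F a q && (c' a q == c' r j))) => // /andP[Faq /eqP e].
    by move: Pq; rewrite (hbF _ _ _ _ Faq Frj e).
  have Lz := Zlem hdF hdE hP1' hP2' hrF hr zero.
  exact: (no_child hG hH Frj hr (rowE _ _ _ hr Lz)).
have hrF := @rep_Lval R _ F c' r hbF.
have [L [w hr]] : in_model E c (Smk (Lval R F c' r)).
  by apply/hM; exists (Lval R F c' r), (const_mx 1).
have zeroF : forall a q, P q -> Lval R F c' r a q = 0 :> R.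
  move=> a q Pq; rewrite mxE; case: (eqVneq q r) => [e|]; last by rewrite andbF.
  by subst q.
have Lz := Zlem hdF hdE hP1' hP2' hrF hr zeroF.
have [h1 h2] := half hdE hH hr (rowE _ _ _ hr Lz).
have hrE := @rep_Lval R _ E c r hbE.
have [M [d hr']] : in_model F c' (Smk (Lval R E c r)).
  by apply/hM; exists (Lval R E c r), (const_mx 1).
have zeroE : forall a q, P q -> Lval R E c r a q = 0 :> R.
  move=> a q Pq; rewrite mxE; case: (eqVneq q r) => [e|]; last by rewrite andbF.
  by subst q.
have Mz := Zlem hdE hdF hP1 hP2 hrE hr' zeroE.
have rowM : forall b, M r b = 0.
  move=> b; case: (boolP (F r b)) => h; first exact: Mz (IH _ (claim1 _ h)).
  by case: hr' => _ -> // _ _.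
have [k1 k2] := half hdF hG hr' rowM.
apply: AGi => //; split => //.
  by move=> a; apply/idP/idP => [/k1|/h1].
move=> a b Ea Eb; have Fa := k1 _ Ea; have Fb := k1 _ Eb; split.
  exact: h2.
exact: k2.
Qed.

Theorem theorem5p13 (R : realType) (n : nat)
  (E : rel 'I_n) (c : 'I_n -> 'I_n -> nat)
  (F : rel 'I_n) (c' : 'I_n -> 'I_n -> nat) :
  BPEC_DAG E c -> BPEC_DAG F c' ->
  (forall S : 'M[R]_n, in_model E c S <-> in_model F c' S) ->
  (forall i j, E i j = F i j) /\
  (forall i j k l, E i j -> E k l -> (c i j = c k l <-> c' i j = c' k l)).
Proof.
move=> hG hH hM.
have hQ : forall r, Qg E F c c' r by move=> r; case: (allAG hG hH hM r).
have [_ _ hbE] := hG; have [_ _ hbF] := hH.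
split; first by move=> i j; case: (hQ j).
move=> i j k l Eij Ekl; split => e.
  have jl := hbE _ _ _ _ Eij Ekl e; subst l.
  by case: (hQ j) => _ h _; apply/(h _ _ Eij Ekl).
have Fij : F i j by case: (hQ j) => h _ _; rewrite -h.
have Fkl : F k l by case: (hQ l) => h _ _; rewrite -h.
have jl := hbF _ _ _ _ Fij Fkl e; subst l.
by case: (hQ j) => _ h _; apply/(h _ _ Eij Ekl).
Qed.
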